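(* Let $N\ge1$, $M\in\mathbb{N}^*$, $p\in[1,\infty)$, and let $(u_k)_{k\ge1}$ be a sequence of nonnegative numbers. Let $\psi\in C^\infty_c(\mathbb{R})$ be a function which is not a polynomial of degree at most $M-1$ and with $\mathrm{supp}(\psi)\subset[-\eta,\eta]$ for some $\eta\ge1$, and set \[f(x_1,\dots,x_N)=\sum_{k\ge1}u_k\,\psi\!\left(\frac{x_1-2(M+\eta)k}{2^{-k}}\right)\cdots\psi\!\left(\frac{x_N-2(M+\eta)k}{2^{-k}}\right).\] Then there is a constant $c>0$ depending only on $N$, $p$, $M$ and $\psi$ such that for every $j\ge1$, \[\sup_{2^{-(j+1)}\le|h|\le2^{-j}}\|\Delta_h^Mf\|_{L^p(\mathbb{R}^N)}\ge c\,u_j\,2^{-jN/p}.\]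
   Context: $\Delta_h^Mf(x):=\sum_{j=0}^M(-1)^{M-j}\binom{M}{j}f(x+jh)$ for $x,h\in\mathbb{R}^N$. *)

(* Defs.v *)
From HB Require Import structures.
From mathcomp Require Import all_boot all_order all_algebra.
From mathcomp Require Import all_classical all_reals all_analysis.
Unset Printing Implicit Defensive.
Import Order.TTheory GRing.Theory Num.Theory.
Import numFieldNormedType.Exports.
Local Open Scope ring_scope.

Section Defs.
Context {R : realType}.

(* Points of R^N are row vectors 'rV[R]_N; coordinate i of x is x ord0 i. *)

Definition eucl_norm (N : nat) (h : 'rV[R]_N) : R :=
  Num.sqrt (\sum_(i < N) h ord0 i ^+ 2).

Definition fdiff (N M : nat) (h : 'rV[R]_N) (f : 'rV[R]_N -> R)
    (x : 'rV[R]_N) : R :=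
  \sum_(j < M.+1) (-1) ^+ (M - j) * ('C(M, j))%:R * f (x + j%:R *: h).

Definition rcons_row (n : nat) (t : R) (y : 'rV[R]_n) : 'rV[R]_n.+1 :=
  \row_(i < n.+1) match unlift ord0 i with Some k => y ord0 k | None => t end.

(* Integral over R^n w.r.t. Lebesgue measure, as the iterated integral
   of one-dimensional Lebesgue integrals (Tonelli; used only for
   nonnegative integrands). *)
Fixpoint iter_integral (n : nat) : ('rV[R]_n -> \bar R) -> \bar R :=
  match n with
  | 0 => fun F => F 0
  | n'.+1 => fun F =>
      (\int[@lebesgue_measure R]_t iter_integral n' (fun y => F (rcons_row n' t y)))%E
  end.

Definition Lp_norm (N : nat) (p : R) (g : 'rV[R]_N -> R) : \bar R :=
  poweR (iter_integral N (fun x => (`|g x| `^ p)%:E)) p^-1.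

Definition smooth (psi : R -> R) : Prop :=
  forall (n : nat) (x : R), derivable (derive1n n psi) x 1.

Definition compact_support (psi : R -> R) : Prop :=
  exists a : R, forall x, a < `|x| -> psi x = 0.

Definition is_poly_deg_le (d : nat) (psi : R -> R) : Prop :=
  exists q : {poly R}, (size q <= d.+1)%N /\ forall x, psi x = q.[x].

Definition fterm (N M : nat) (eta : R) (psi : R -> R) (u : nat -> R)
    (k : nat) (x : 'rV[R]_N) : R :=
  u k * \prod_(i < N)
    psi ((x ord0 i - 2 * (M%:R + eta) * k%:R) / (2 ^- k)).

Definition fsum (N M : nat) (eta : R) (psi : R -> R) (u : nat -> R)
    (x : 'rV[R]_N) : R :=
  limn (fun n => \sum_(1 <= k < n) fterm N M eta psi u k x).

End Defs.

(* Main.v *)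
Require Import Defs.
From HB Require Import structures.
From mathcomp Require Import all_boot all_order all_algebra.
From mathcomp Require Import all_classical all_reals all_analysis.
From mathcomp Require Import ring lra.
Import Order.TTheory GRing.Theory Num.Theory.
Import numFieldNormedType.Exports.
Local Open Scope ring_scope.
Local Open Scope classical_set_scope.

Section H.
Context {R : realType}.
Local Open Scope ereal_scope.



Lemma int_le (f g : R -> \bar R) : (forall x, 0 <= f x) -> (forall x, f x <= g x) ->
  \int[@lebesgue_measure R]_t f t <= \int[@lebesgue_measure R]_t g t.
Proof.
move=> f0 fg.
have g0 x : 0 <= g x by apply: le_trans (fg x).
rewrite !ge0_integralTE//.
apply: le_ereal_sup => _ [h hf <-]; exists h => //= x.
exact: le_trans (hf x) (fg x).
Qed.

Lemma iter_ge0 n (F : 'rV[R]_n -> \bar R) : (forall x, 0 <= F x) ->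
  0 <= iter_integral n F.
Proof.
elim: n F => [|n IH] F F0 /=; first exact: F0.
by apply: integral_ge0 => t _; apply: IH.
Qed.

Lemma iter_le n (F G : 'rV[R]_n -> \bar R) : (forall x, 0 <= F x) ->
  (forall x, F x <= G x) -> iter_integral n F <= iter_integral n G.
Proof.
elim: n F G => [|n IH] F G F0 FG /=; first exact: FG.
apply: int_le => t; first by apply: iter_ge0.
by apply: IH.
Qed.


Local Close Scope ereal_scope.


Lemma rcons0 n (t : R) (y : 'rV[R]_n) : rcons_row n t y ord0 ord0 = t.
Proof. by rewrite /rcons_row mxE unlift_none. Qed.

Lemma rconsS n (t : R) (y : 'rV[R]_n) (i : 'I_n) :
  rcons_row n t y ord0 (lift ord0 i) = y ord0 i.
Proof. by rewrite /rcons_row mxE liftK. Qed.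

Lemma int_cst_indic (k a b : R) : (0 <= k) -> a <= b ->
  (\int[@lebesgue_measure R]_t (k * \1_(`[a, b]%classic) t)%:E = (k * (b - a))%:E)%E.
Proof.
move=> k0 ab.
rewrite integralZl_indic //; last by move=> k0'; move: k0; rewrite leNgt k0'.
rewrite integral_indic // setIT.
have H := lebesgue_measure_itv `[a, b]%R. have -> : (lebesgue_measure_lebesgue_measure__canonical__measure_function_Measure R `[a, b]%classic = lebesgue_measure `[a,b]%classic) by []. rewrite H /= lte_fin.
case: (ltP a b) => [_|ba]; first by rewrite -EFinB -EFinM.
have -> : b = a by apply/eqP; rewrite eq_le ba ab.
by rewrite subrr mulr0 mule0.
Qed.

Lemma iter_prod_indic n (k : R) (lo hi : nat -> R) : 0 <= k ->
  (forall i, lo i <= hi i) ->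
  iter_integral n (fun x => (k * \prod_(i < n) \1_(`[lo i, hi i]%classic) (x ord0 i))%:E)
  = (k * \prod_(i < n) (hi i - lo i))%:E.
Proof.
elim: n k lo hi => [|n IH] k lo hi k0 lh /=; first by rewrite !big_ord0.
transitivity (\int[@lebesgue_measure R]_t
   ((k * \prod_(i < n) (hi i.+1 - lo i.+1)) * \1_(`[lo 0%N, hi 0%N]%classic) t)%:E)%E.
  apply: eq_integral => t _.
  rewrite [X in _ = X](_ : _ = ((k * \1_(`[lo 0%N, hi 0%N]%classic) t) * \prod_(i < n) (hi i.+1 - lo i.+1))%:E); last by rewrite mulrAC.
  rewrite -(IH (k * \1_(`[lo 0%N, hi 0%N]%classic) t) (fun i => lo i.+1) (fun i => hi i.+1)) //.
  - congr iter_integral; apply: funext => y; congr EFin.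
    rewrite big_ord_recl rcons0 mulrA; congr (_ * _).
    by apply: eq_bigr => i _; rewrite rconsS.
  - by apply: mulr_ge0 => //; exact: indic_ge0.
rewrite int_cst_indic //; last by apply: mulr_ge0 => //; apply: prodr_ge0 => i _; rewrite subr_ge0.
by rewrite big_ord_recl -mulrA [X in k * X]mulrC.
Qed.



Lemma smooth_cont (psi : R -> R) : smooth psi -> continuous psi.
Proof.
move=> sm x; apply: differentiable_continuous; apply/derivable1_diffP.
exact: (sm 0%N x).
Qed.

Lemma sum_cont (K : nat) (F : nat -> R -> R) t :
  (forall m, {for t, continuous (F m)}) ->
  {for t, continuous (fun s => \sum_(m < K) F m s)}.
Proof.
move=> H; elim: K => [|K IH].
  have -> : (fun s => \sum_(m < 0) F m s) = cst 0 by apply: funext => s; rewrite big_ord0.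
  exact: cst_continuous.
have -> : (fun s => \sum_(m < K.+1) F m s) = (fun s => \sum_(m < K) F m s) + F K.
  by apply: funext => s; rewrite big_ord_recr.
exact: continuousD.
Qed.

Lemma term_cont (psi : R -> R) (c d : R) t : continuous psi ->
  {for t, continuous (fun s => c * psi (s + d))}.
Proof.
move=> pc; apply: cvgMr.
apply: continuous_comp; last exact: pc.
by apply: cvgD; [exact: cvg_id | exact: cvg_cst].
Qed.

Lemma cont_lb (g : R -> R) t : {for t, continuous g} -> g t != 0 ->
  exists d e : R, [/\ 0 < d, d <= 1, 0 < e &
     forall s, `|s - t| <= d -> e <= `|g s| ].
Proof.
move=> gc gt0.
have e0 : 0 < `|g t| / 2 by rewrite divr_gt0 // normr_gt0.
have := (cvgrPdist_lt _ _).1 gc _ e0. move=> /(_ _).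
move=> Hn. have [d d0 Hd] := (@nbhs_ballP _ _ t _).1 Hn.
exists (Num.min (d / 2) 1), (`|g t| / 2); split => //.
- by rewrite lt_min divr_gt0 // ltr01.
- by rewrite ge_min lexx orbT.
move=> s hs.
have : `|g t - g s| < `|g t| / 2.
  apply: Hd; rewrite /ball /= distrC (le_lt_trans hs) // gt_min ltr_pdivrMr // ltr_pMr //.
  by rewrite ltr1n.
move=> H.
have T : `|g t| <= `|g t - g s| + `|g s|.
  by rewrite -[X in `|X| <= _](subrK (g s)); exact: ler_normD.
lra.
Qed.



Definition Dpsi (M : nat) (psi : R -> R) (s : R) :=
  \sum_(m < M.+1) (-1) ^+ (M - m) * ('C(M, m))%:R * psi (s + m%:R).

Lemma psi_nz d (psi : R -> R) : ~ is_poly_deg_le d psi -> exists t, psi t != 0.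
Proof.
move=> np; apply: contrapT => H; apply: np; exists 0; split; first by rewrite size_poly0.
move=> x; rewrite horner0; apply: contrapT => /eqP hx; apply: H; exists x; exact: hx.
Qed.

Lemma D_nz M (psi : R -> R) : compact_support psi -> (exists t, psi t != 0) ->
  exists t, Dpsi M psi t != 0.
Proof.
move=> [A HA] [t2 ht2]; apply: contrapT => H.
have D0 s : Dpsi M psi s = 0 by apply: contrapT => /eqP hs; apply: H; exists s.
have [K HK] : exists K : nat, A - t2 < K%:R.
  exists (Num.trunc (`|A - t2|)).+1.
  apply: le_lt_trans (ler_norm _) _; exact: truncnS_gt.
have Q n : forall m : nat, psi (t2 + K%:R - n%:R + m%:R) = 0.
  elim: n => [|n IH] m.
    apply: HA; rewrite subr0; apply: lt_le_trans (ler_norm _).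
    have : 0 <= m%:R :> R by [].
    lra.
  case: m => [|m].
    have := D0 (t2 + K%:R - n.+1%:R); rewrite /Dpsi big_ord_recl big1.
      rewrite addr0 subn0 bin0 mulr1 addr0 => /eqP; rewrite mulf_eq0 signr_eq0 /= => /eqP.
      by apply.
    move=> i _; rewrite (_ : t2 + K%:R - n.+1%:R + (lift ord0 i)%:R = t2 + K%:R - n%:R + i%:R).
      by rewrite IH mulr0.
    rewrite lift0 /= !mulrSr; ring.
  by rewrite -(IH m) !mulrSr; congr psi; ring.
move/eqP: ht2; apply; have := Q K 0%N.
by rewrite addr0 addrK.
Qed.

Lemma D_supp M (psi : R -> R) (eta t : R) : (forall x, eta < `|x| -> psi x = 0) ->
  Dpsi M psi t != 0 -> `|t| <= eta + M%:R.
Proof.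
move=> Hs; apply: contraR; rewrite -ltNge => Ht.
rewrite /Dpsi big1 // => i _; rewrite Hs ?mulr0 //.
have : (i%:R <= M%:R :> R) by rewrite ler_nat -ltnS.
have : 0 <= i%:R :> R by [].
have : `|t| <= `|t + i%:R| + `|i%:R|.
  by rewrite -[X in `|X| <= _](addrK i%:R); exact: ler_normB.
rewrite normr_nat.
lra.
Qed.





Lemma fsum_single N M eta psi u j (y : 'rV[R]_N) : (1 <= j)%N ->
  (forall k, k != j -> fterm N M eta psi u k y = 0) ->
  fsum N M eta psi u y = fterm N M eta psi u j y.
Proof.
move=> j1 H; rewrite /fsum; apply: lim_near_cst; first exact: Rhausdorff.
apply: filterS (nbhs_infty_gt j) => k /= jk.
rewrite (bigD1_seq j) /=; last exact: iota_uniq.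
  by rewrite big1 ?addr0 // => i /H.
by rewrite mem_index_iota j1.
Qed.

Lemma nat_dist (j k : nat) : k != j -> 1 <= `|j%:R - k%:R : R|.
Proof.
move=> kj; case: (ltngtP k j) kj => // [kj|jk] _.
  rewrite ger0_norm; last by rewrite subr_ge0 ler_nat ltnW.
  by rewrite lerBrDr addrC natr1 ler_nat.
rewrite ler0_norm; last by rewrite subr_le0 ler_nat ltnW.
by rewrite opprB lerBrDr addrC natr1 ler_nat.
Qed.

Lemma sep (M : nat) (eta y : R) (j k : nat) : 1 <= eta -> (1 <= M)%N -> k != j ->
  `|y - 2 * (M%:R + eta) * j%:R| <= (eta + 2 * M%:R + 1) / 2 ->
  eta < `|(y - 2 * (M%:R + eta) * k%:R) / 2 ^- k|.
Proof.
move=> e1 M1 kj hy.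
have M1' : 1 <= M%:R :> R by rewrite ler1n.
have d := @nat_dist j k kj.
have hjk : 2 * (M%:R + eta) <= `|2 * (M%:R + eta) * j%:R - 2 * (M%:R + eta) * k%:R|.
  rewrite -mulrBr normrM ger0_norm; last lra.
  by rewrite ler_peMr //; lra.
have T : `|2 * (M%:R + eta) * j%:R - 2 * (M%:R + eta) * k%:R| <=
   `|y - 2 * (M%:R + eta) * j%:R| + `|y - 2 * (M%:R + eta) * k%:R|.
  rewrite -[X in `|X| <= _](_ : (y - 2 * (M%:R + eta) * k%:R) - (y - 2 * (M%:R + eta) * j%:R) = _); last by ring.
  by rewrite [X in _ <= X]addrC; apply: ler_normB.
have H1 : eta < `|y - 2 * (M%:R + eta) * k%:R| by lra.
rewrite invrK normrM (ger0_norm (_ : 0 <= 2 ^+ k)) //.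
apply: lt_le_trans H1 _; rewrite ler_peMr //; apply: exprn_ege1; by rewrite ler1n.
Qed.


Lemma w_le (j : nat) : (1 <= j)%N -> 0 < 2 ^- j :> R /\ 2 ^- j <= 2^-1 :> R.
Proof.
move=> j1; split; first by rewrite invr_gt0 exprn_gt0.
rewrite lef_pV2 ?posrE ?exprn_gt0 //.
case: j j1 => // j _; rewrite exprS ler_peMr //; apply: exprn_ege1; by rewrite ler1n.
Qed.

Definition hvec (n j : nat) : 'rV[R]_n.+1 :=
  \row_(i < n.+1) (if i == ord0 then 2 ^- j else 0).

Lemma core (n M : nat) (eta : R) psi u (j : nat) (t1 d1 : R) (x : 'rV[R]_n.+1) :
  1 <= eta -> (1 <= M)%N -> (1 <= j)%N -> (forall y, eta < `|y| -> psi y = 0) ->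
  `|t1| <= eta + M%:R -> 0 <= d1 <= 1 ->
  `|(x ord0 ord0 - 2 * (M%:R + eta) * j%:R) / 2 ^- j - t1| <= d1 ->
  fdiff n.+1 M (hvec n j) (fsum n.+1 M eta psi u) x =
  u j * Dpsi M psi ((x ord0 ord0 - 2 * (M%:R + eta) * j%:R) / 2 ^- j) *
  \prod_(i < n) psi ((x ord0 (lift ord0 i) - 2 * (M%:R + eta) * j%:R) / 2 ^- j).
Proof.
move=> e1 M1 j1 Hs ht1 /andP[d0 d1le] hx.
have [w0 wle] := w_le j j1.
set w := 2 ^- j in w0 wle hx *.
set a := 2 * (M%:R + eta) * j%:R in hx *.
set s := (x ord0 ord0 - a) / w in hx *.
have hs : `|s| <= eta + M%:R + 1.
  have : `|s| <= `|s - t1| + `|t1|.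
    by rewrite -[X in `|X| <= _](subrK t1); exact: ler_normD.
  lra.
have x0E : x ord0 ord0 = a + s * w by rewrite /s divfK ?gt_eqF // addrC subrK.
rewrite /fdiff /Dpsi mulr_sumr mulr_suml; apply: eq_bigr => m _.
have coordE i : (x + m%:R *: hvec n j) ord0 i = x ord0 i + m%:R * (if i == ord0 then w else 0).
  by rewrite !mxE.
rewrite (@fsum_single _ _ _ _ _ j) //; last first.
  move=> k kj; rewrite /fterm big_ord_recl (Hs _ (sep _ _ _ _ _ e1 M1 kj _)); first by rewrite mul0r mulr0.
  rewrite -/a coordE eqxx x0E.
  have -> : a + s * w + m%:R * w - a = (s + m%:R) * w by ring.
  rewrite normrM (gtr0_norm w0).
  have hm : m%:R <= M%:R :> R by rewrite ler_nat -ltnS.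
  have : `|s + m%:R| <= eta + 2 * M%:R + 1.
    have := ler_normD s m%:R; rewrite normr_nat; lra.
  move=> H; apply: le_trans (_ : (eta + 2 * M%:R + 1) * w <= _).
    by apply: ler_wpM2r => //; exact: ltW.
  rewrite ler_pM2l //; have : 0 <= M%:R :> R by []; lra.
rewrite /fterm big_ord_recl -/a -/w coordE eqxx x0E.
have -> : (a + s * w + m%:R * w - a) / w = s + m%:R by field; rewrite gt_eqF.
rewrite (_ : \prod_(i < n) psi (((x + m%:R *: hvec n j) ord0 (lift ord0 i) - a) / w)
   = \prod_(i < n) psi ((x ord0 (lift ord0 i) - a) / w)).
  ring.
apply: eq_bigr => i _; rewrite coordE.
by rewrite eq_sym (negbTE (neq_lift ord0 i)) mulr0 addr0.
Qed.

End H.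

Lemma box_iff (R : realType) (a t d w y : R) : 0 < w ->
  a + (t - d) * w <= y <= a + (t + d) * w -> `|(y - a) / w - t| <= d.
Proof.
move=> w0 /andP[h1 h2].
set z := (y - a) / w.
have yE : y = a + z * w by rewrite /z divfK ?gt_eqF // addrC subrK.
rewrite yE in h1 h2.
have : t - d <= z by rewrite -(ler_pM2r w0); lra.
have : z <= t + d by rewrite -(ler_pM2r w0); lra.
rewrite ler_norml; lra.
Qed.

Lemma pow_inv (R : realType) (p y : R) : 0 < p -> 0 <= y -> (y `^ p) `^ p^-1 = y.
Proof. by move=> p0 y0; rewrite -powRrM mulfV ?gt_eqF // powRr1. Qed.

Lemma pow2 (R : realType) (p : R) (j N : nat) :
  2 `^ (- (j%:R * N%:R / p)) = ((2 ^- j) ^+ N) `^ p^-1 :> R.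
Proof.
have -> : (2 ^- j) ^+ N = (2 ^+ (j * N))^-1 :> R by rewrite exprVn exprM.
by rewrite -powR_mulrn // -powRN -powRrM natrM mulNr.
Qed.

Lemma hvec_norm (R : realType) n j : (1 <= j)%N ->
  (2 ^- j.+1 <= eucl_norm n.+1 (@hvec R n j) <= 2 ^- j).
Proof.
move=> j1; rewrite /eucl_norm big_ord_recl big1 ?addr0; last first.
  by move=> i _; rewrite mxE eq_sym (negbTE (neq_lift ord0 i)) expr0n.
rewrite mxE eqxx sqrtr_sqr ger0_norm; last by rewrite invr_ge0 exprn_ge0.
rewrite lexx andbT lef_pV2 ?posrE ?exprn_gt0 // exprS ler_peMl //.
  by rewrite ler1n.
Qed.

Theorem lemma8p2 (R : realType) (N M : nat) (p : R) (psi : R -> R) :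
  (1 <= N)%N -> (1 <= M)%N -> 1 <= p ->
  smooth psi -> compact_support psi -> ~ is_poly_deg_le (M.-1) psi ->
  exists c : R, 0 < c /\
    forall eta : R, 1 <= eta -> (forall x, eta < `|x| -> psi x = 0) ->
    forall u : nat -> R, (forall k, 0 <= u k) ->
    forall j : nat, (1 <= j)%N ->
      ((c * u j * 2 `^ (- (j%:R * N%:R / p)))%:E <=
       ereal_sup [set Lp_norm N p (fdiff N M h (fsum N M eta psi u))
                 | h in [set h : 'rV[R]_N |
                          (2 ^- j.+1 <= eucl_norm N h <= 2 ^- j)%R]])%E.
Proof.
move=> N1 M1 p1 sm cs np.
case: N N1 => // n _.
have p0 : 0 < p by lra.
have pc := smooth_cont psi sm.
have [t2 ht2] := psi_nz _ psi np.
have [t1 ht1] := D_nz M psi cs (ex_intro _ t2 ht2).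
have Dc : {for t1, continuous (Dpsi M psi)}.
  exact: (@sum_cont R M.+1 (fun (m : nat) s => (-1) ^+ (M - m) * ('C(M, m))%:R * psi (s + m%:R)) t1
           (fun m => term_cont psi _ _ t1 pc)).
have [d1 [e1 [d10 d11 e10 H1]]] := cont_lb _ _ Dc ht1.
have [d2 [e2 [d20 d21 e20 H2]]] := cont_lb _ _ (pc t2) ht2.
pose C := 2 * d1 * (2 * d2) ^+ n.
have C0 : 0 < C by rewrite /C !mulr_gt0 // exprn_gt0 // mulr_gt0.
exists (e1 * e2 ^+ n * C `^ p^-1); split.
  by rewrite !mulr_gt0 ?exprn_gt0 ?powR_gt0.
move=> eta eta1 Hs u u0 j j1.
have ht1' := D_supp M psi eta t1 Hs ht1.
refine (le_ereal_sup_tmp _).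
exists (Lp_norm n.+1 p (fdiff n.+1 M (hvec n j) (fsum n.+1 M eta psi u))).
  by exists (hvec n j) => //; exact: hvec_norm.
have [w0 wle] := @w_le R j j1.
set w := 2 ^- j in w0 wle *.
set a := 2 * (M%:R + eta) * j%:R.
pose T (k : nat) := if k == 0%N then t1 else t2.
pose dd (k : nat) := if k == 0%N then d1 else d2.
pose lo (k : nat) := a + (T k - dd k) * w.
pose hi (k : nat) := a + (T k + dd k) * w.
pose K0 := (u j * e1 * e2 ^+ n) `^ p.
have K00 : 0 <= K0 by exact: powR_ge0.
have lohi k : lo k <= hi k.
  rewrite /lo /hi lerD2l ler_pM2r // lerD2l /dd.
  by case: (k == 0%N); lra.
have step1 : (iter_integral n.+1
    (fun x => (K0 * \prod_(i < n.+1) \1_(`[lo i, hi i]%classic) (x ord0 i))%:E) <=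
   iter_integral n.+1 (fun x => (`|fdiff n.+1 M (hvec n j) (fsum n.+1 M eta psi u) x| `^ p)%:E))%E.
  apply: iter_le => x.
    by rewrite lee_fin mulr_ge0 // prodr_ge0 // => i _; exact: indic_ge0.
  rewrite lee_fin.
  have [allin | nall] := pselect (forall i : 'I_n.+1, lo i <= x ord0 i <= hi i); last first.
    have [i ni] : exists i : 'I_n.+1, ~ (lo i <= x ord0 i <= hi i) by apply/existsNP.
    rewrite (bigD1 i) //= indicE memNset ?mul0r ?mulr0 ?powR_ge0 //.
  rewrite big1 ?mulr1; last by move=> i _; rewrite indicE mem_set //= in_itv /= allin.
  have box0 : `|(x ord0 ord0 - a) / w - t1| <= d1.
    by apply: box_iff => //; have := allin ord0; rewrite /lo /hi /T /dd /=.
  have boxi (i : 'I_n) : `|(x ord0 (lift ord0 i) - a) / w - t2| <= d2.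
    by apply: box_iff => //; have := allin (lift ord0 i); rewrite /lo /hi /T /dd lift0 /=.
  rewrite (core _ _ _ _ _ _ t1 d1 _ eta1 M1 j1 Hs ht1'); last first.
  - exact: box0.
  - by rewrite d11 ltW.
  apply: ge0_ler_powR; first lra.
  - by rewrite nnegrE !mulr_ge0 ?exprn_ge0 // ltW.
  - by rewrite nnegrE normr_ge0.
  rewrite !normrM normr_prod (ger0_norm (u0 j)) -mulrA -[X in _ <= X]mulrA.
  apply: ler_wpM2l => //.
  apply: ler_pM => //; first exact: ltW.
  - by rewrite exprn_ge0 // ltW.
  - exact: H1.
  have -> : e2 ^+ n = \prod_(i < n) e2 by rewrite prodr_const card_ord.
  apply: ler_prod => i _; apply/andP; split; first exact: ltW.
  exact: H2.
rewrite iter_prod_indic // in step1.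
have P : \prod_(i < n.+1) (hi i - lo i) = C * w ^+ n.+1.
  rewrite big_ord_recl (eq_bigr (fun _ => 2 * d2 * w)); last first.
    by move=> i _; rewrite /hi /lo /dd lift0 /=; ring.
  rewrite prodr_const card_ord /hi /lo /dd /= /C exprMn exprS; ring.
have E : (K0 * \prod_(i < n.+1) (hi i - lo i)) `^ p^-1 =
    (u j * e1 * e2 ^+ n) * C `^ p^-1 * (w ^+ n.+1) `^ p^-1.
  rewrite P powRM //; last by rewrite mulr_ge0 ?exprn_ge0 // ltW.
  rewrite powRM ?exprn_ge0 ?(ltW w0) ?(ltW C0) // pow_inv //; last first.
    by rewrite !mulr_ge0 ?exprn_ge0 // ltW.
  by rewrite mulrA.
rewrite /Lp_norm.
apply: le_trans (gt0_ler_poweR _ _ _ step1); last first.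
- rewrite in_itv /= leey andbT; apply: integral_ge0 => t _; apply: iter_ge0 => y; rewrite lee_fin powR_ge0.
  by [].
- by rewrite in_itv /= leey andbT lee_fin mulr_ge0 // prodr_ge0 // => i _; rewrite subr_ge0.
- by rewrite invr_ge0 ltW.
rewrite poweR_EFin lee_fin E pow2 -/w le_eqVlt; apply/orP; left; apply/eqP; ring.
Qed.
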